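(* Let $T$ be an $spo$-tableau and $x_1\in B_1$ such that the new box of $U=x_1\rightarrow T$ lies in row 1. If $x_2\in B_0$ and the insertion of $x_2$ into $U$ causes a cancellation, then the first rows of $U\leftarrow x_2$ and of $U$ have the same number of boxes.
   Context: Fix positive integers $m,n$. Let $B_0=\{1,\bar1,2,\bar2,\dots,m,\bar m\}$, $B_1=\{1^\circ,\dots,n^\circ\}$, $B=B_0\cup B_1$, totally ordered by $1<\bar1<2<\bar2<\cdots<m<\bar m<1^\circ<\cdots<n^\circ$. Rows are numbered from the top starting at 1, columns from the left. An $spo$-tableau of shape $\lambda$ is a filling of the Young diagram of $\lambda$ with entries of $B$ such that (i) the boxes containing entries of $B_0$ form a Young diagram $\sigma\subseteq\lambda$, and this part is weakly increasing along rows, strictly increasing down columns, and every entry in row $i$ is $\ge i$; (ii) the entries of $B_1$ (filling $\lambda/\sigma$) are strictly increasing along rows and weakly increasing down columns. $spo$-insertion: a forward jeu de taquin slide on an empty box with right neighbour $a$ and lower neighbour $b$ moves $a$ left into the empty box if $a<b$ or ($a=b\in B_1$), and moves $b$ up into the empty box if $b<a$ or ($a=b\in B_0$); if only one neighbour exists it moves in; slides are repeated until the empty box has no right or lower neighbour, and then that box is deleted. Inserting $z\in B_0$ into row $r$: if no entry of the row exceeds $z$, append $z$ in a new box at the end of the row; otherwise let $w$ be the least entry of the row with $w>z$; if $z=r$ (unbarred) and $w=\bar r$, delete $\bar r$ leaving an empty box (a cancellation); otherwise replace $w$ by $z$, displacing $w$. Inserting $z\in B_1$ into column $c$: if no entry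 of the column exceeds $z$, append $z$ in a new box at the bottom; otherwise replace the least entry $w>z$ of the column by $z$, displacing $w$. To insert $x\in B_0$ into $T$ (result $T\leftarrow x$) start by inserting $x$ into row 1; to insert $x\in B_1$ (result $x\rightarrow T$) start by inserting $x$ into column 1. Whenever an entry $w$ is displaced from a box in row $r$, column $c$: if $w\in B_0$ insert it into row $r+1$; if $w\in B_1$ insert it into column $c+1$. The process ends when an entry is placed in a new box, or when a cancellation occurs, in which case the empty box is moved to an outer corner by forward slides and deleted. If no cancellation occurs the result has exactly one new box; if a cancellation occurs the result has exactly one box fewer. *)

(* Defs.v *)
From mathcomp Require Import all_boot.
Set Implicit Arguments. Unset Strict Implicit. Unset Printing Implicit Defensive.

(* Letters: inl (i, false) = i, inl (i, true) = \bar i  (elements of B_0);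
            inr j = j^circ (elements of B_1). *)
Definition letter := ((nat * bool) + nat)%type.

Definition isB0 (a : letter) : bool := if a is inl _ then true else false.
Definition isB1 (a : letter) : bool := ~~ isB0 a.

Definition inB0 (m : nat) (a : letter) : bool :=
  if a is inl (i, _) then (1 <= i <= m) else false.
Definition inB1 (n : nat) (a : letter) : bool :=
  if a is inr j then (1 <= j <= n) else false.
Definition inB (m n : nat) (a : letter) : bool := inB0 m a || inB1 n a.

Definition ltL (a b : letter) : bool :=
  match a, b with
  | inl (i, bi), inl (j, bj) => (i < j) || ((i == j) && ~~ bi && bj)
  | inl _, inr _ => true
  | inr _, inl _ => false
  | inr i, inr j => i < j
  end.
Definition leL (a b : letter) : bool := (a == b) || ltL a b.

(* Tableaux: list of rows, top row first; indices below are 0-based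
   (row index r here is row r+1 of the paper). *)
Definition tableau := seq (seq letter).
Definition dflt : letter := inr 0.
Definition row (t : tableau) (r : nat) : seq letter := nth [::] t r.
Definition entry (t : tableau) (r c : nat) : option letter :=
  nth None [seq Some a | a <- row t r] c.

Definition isB0o (o : option letter) : bool :=
  if o is Some a then isB0 a else false.

Definition is_spo (m n : nat) (t : tableau) : Prop :=
  all (fun s => 0 < size s) t /\ sorted geq (shape t) /\
  all (all (inB m n)) t /\
  (* the B_0-boxes form a Young diagram sigma *)
  (forall r c, isB0o (entry t r c.+1) -> isB0o (entry t r c)) /\
  (forall r c, isB0o (entry t r.+1 c) -> isB0o (entry t r c)) /\
  (forall r c a b, entry t r c = Some a -> entry t r c.+1 = Some b ->
     isB0 a -> isB0 b -> leL a b) /\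
  (forall r c a b, entry t r c = Some a -> entry t r.+1 c = Some b ->
     isB0 a -> isB0 b -> ltL a b) /\
  (* every B_0 entry in (paper) row r+1 is >= r+1 *)
  (forall r c i bi, entry t r c = Some (inl (i, bi)) -> r.+1 <= i) /\
  (forall r c a b, entry t r c = Some a -> entry t r c.+1 = Some b ->
     isB1 a -> isB1 b -> ltL a b) /\
  (forall r c a b, entry t r c = Some a -> entry t r.+1 c = Some b ->
     isB1 a -> isB1 b -> leL a b).

Definition minL (a b : letter) : letter := if ltL b a then b else a.
Definition least (s : seq letter) : letter :=
  match s with [::] => dflt | x :: s' => foldl minL x s' end.

Definition set_row (t : tableau) (r : nat) (s : seq letter) : tableau :=
  set_nth [::] t r s.
Definition set_entry (t : tableau) (r c : nat) (a : letter) : tableau :=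
  set_row t r (set_nth a (row t r) c a).

Inductive outcome := NewBox of nat & nat (* row, column (0-based) *)
                   | Cancelled.

Inductive task :=
  | RowIns of letter & nat
  | ColIns of letter & nat
  | Slide of nat & nat       (* empty box at (r, c) to be slid out *)
  | Fin of outcome.

Definition step (t : tableau) (k : task) : tableau * task :=
  match k with
  | RowIns z r =>
      let rw := row t r in
      let big := [seq a <- rw | ltL z a] in
      if big is [::] then (set_row t r (rcons rw z), Fin (NewBox r (size rw)))
      else
        let w := least big in
        let c := index w rw in
        if (z == inl (r.+1, false)) && (w == inl (r.+1, true)) then
          (t, Slide r c)  (* cancellation: empty box at (r,c) *)
        else
          let t' := set_entry t r c z in
          if isB0 w then (t', RowIns w r.+1) else (t', ColIns w c.+1)
  | ColIns z c =>
      let colR := [seq r <- iota 0 (size t) | c < size (row t r)] in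
      let ents := [seq nth dflt (row t r) c | r <- colR] in
      let big := [seq a <- ents | ltL z a] in
      if big is [::] then
        let r0 := size colR in
        (set_row t r0 (rcons (row t r0) z), Fin (NewBox r0 (size (row t r0))))
      else
        let w := least big in
        let r := nth 0 colR (index w ents) in
        let t' := set_entry t r c z in
        if isB0 w then (t', RowIns w r.+1) else (t', ColIns w c.+1)
  | Slide r c =>
      let rw := row t r in
      let rb := row t r.+1 in
      let hasR := c.+1 < size rw in
      let hasB := c < size rb in
      let a := nth dflt rw c.+1 in
      let b := nth dflt rb c in
      if hasR && hasB then
        if ltL a b || ((a == b) && isB1 a) then (set_entry t r c a, Slide r c.+1)
        else (set_entry t r c b, Slide r.+1 c)
      else if hasR then (set_entry t r c a, Slide r c.+1)
      else if hasB then (set_entry t r c b, Slide r.+1 c)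
      else ([seq s <- set_row t r (take c rw) | 0 < size s], Fin Cancelled)
  | Fin o => (t, Fin o)
  end.

Fixpoint run (fuel : nat) (t : tableau) (k : task) : option (tableau * outcome) :=
  match k with
  | Fin o => Some (t, o)
  | _ => match fuel with
         | 0 => None
         | f.+1 => let: (t', k') := step t k in run f t' k'
         end
  end.

(* ample fuel: the process takes at most about 4 * #boxes + 4 steps *)
Definition fuel (t : tableau) : nat := 4 * size (flatten t) + 10.

(* T <- x  for x in B_0 *)
Definition insert_row (t : tableau) (x : letter) := run (fuel t) t (RowIns x 0).
(* x -> T  for x in B_1 *)
Definition insert_col (x : letter) (t : tableau) := run (fuel t) t (ColIns x 0).

(* Main.v *)
Require Import Defs.
From mathcomp Require Import all_boot zify.
Set Implicit Arguments. Unset Strict Implicit. Unset Printing Implicit Defensive.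

Lemma ltL_irr a : ltL a a = false.
Proof. case: a => [[i b]|i] /=; rewrite ?ltnn //= eqxx; by case: b. Qed.

Lemma ltL_trans a b d : ltL a b -> ltL b d -> ltL a d.
Proof.
case: a => [[i bi]|i]; case: b => [[j bj]|j]; case: d => [[k bk]|k] //=;
try (by []); try lia.
Qed.

Lemma ltL_asym a b : ltL a b -> ltL b a = false.
Proof. move=> h; apply/negbTE/negP => h'; have := ltL_trans h h'; by rewrite ltL_irr. Qed.

Lemma leL_trans a b d : leL a b -> leL b d -> leL a d.
Proof.
rewrite /leL => /orP[/eqP->|h] // /orP[/eqP<-|h']; first by rewrite h orbT.
by rewrite (ltL_trans h h') orbT.
Qed.

Lemma leL_refl a : leL a a.
Proof. by rewrite /leL eqxx. Qed.

Lemma ltL_B1 z w : isB1 z -> ltL z w -> isB1 w.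
Proof. by case: z => [[]|] //; case: w => [[]|]. Qed.

Lemma least_mem s : s != [::] -> least s \in s.
Proof.
case: s => // x s _ /=.
elim: s x => [|y s IH] x /=; first by rewrite mem_seq1.
have := IH (minL x y); rewrite /minL; case: ifP => _; rewrite !inE.
  by case/orP=> [->|->]; rewrite ?orbT.
by case/orP=> [->|->]; rewrite ?orbT.
Qed.

Lemma col_noncancel f t z k V : isB1 z -> run f t (ColIns z k) <> Some (V, Cancelled).
Proof.
elim: f t z k => [|f IH] t z k hz //=.
rewrite /step.
set colR := [seq r <- iota 0 (size t) | k < size (row t r)].
set ents := [seq nth dflt (row t r) k | r <- colR].
set big := [seq a <- ents | ltL z a].
have hbig : forall a, a \in big -> ltL z a by move=> a; rewrite mem_filter => /andP[].
case E: big => [|b s]; first by case: (f) => [|?].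
rewrite /=; change (foldl minL b s) with (least (b::s)).
have hw : ltL z (least (b :: s)) by apply: hbig; rewrite E least_mem.
have hw1 := ltL_B1 hz hw.
have -> : isB0 (least (b::s)) = false by move: hw1; rewrite /isB1; case: (isB0 _).
exact: IH.
Qed.

Lemma row_set_row t r s i : row (set_row t r s) i = if i == r then s else row t i.
Proof. by rewrite /row /set_row nth_set_nth. Qed.

Lemma row_set_entry t r c a i :
  row (set_entry t r c a) i = if i == r then set_nth a (row t r) c a else row t i.
Proof. by rewrite /set_entry row_set_row. Qed.

Definition okTask (k : task) : Prop :=
  match k with RowIns _ r => 0 < r | Slide r _ => 0 < r | ColIns z _ => isB1 z
  | Fin _ => False end.

Lemma run_fin f t o : run f t (Fin o) = Some (t, o).
Proof. by case: f. Qed.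

Lemma tail_rows f t k V : 0 < size (row t 0) -> okTask k ->
  run f t k = Some (V, Cancelled) -> row V 0 = row t 0.
Proof.
elim: f t k => [|f IH] t k h0; first by case: k.
case: k => [z r|z cc|r cc|o] hk; last by [].
- rewrite /= /step.
  set rw := row t r.
  set big := [seq a <- rw | ltL z a].
  case E: big => [|b s]; first by rewrite run_fin.
  rewrite /=; change (foldl minL b s) with (least (b::s)).
  set w := least (b :: s).
  case: ifP => _.
    by move/IH; apply.
  have r0 : (0 == r) = false by apply/negbTE; rewrite neq_ltn hk.
  case: ifP => hw.
    move/IH; rewrite row_set_entry r0; apply => //; by rewrite row_set_entry r0.
  move=> H; have hw1 : isB1 w by rewrite /isB1 hw.
  by case: (col_noncancel hw1 H).
- by move=> H; case: (col_noncancel hk H).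
- have r0 : (0 == r) = false by apply/negbTE; rewrite neq_ltn hk.
  rewrite /= /step.
  case: ifP => _; [case: ifP => _|case: ifP => _; last case: ifP => _];
   try (move/IH; rewrite row_set_entry r0; apply => //; by rewrite row_set_entry r0).
  rewrite run_fin => -[<-].
  move: h0; rewrite /row /set_row.
  case: t => [|x t] //= h0.
  case: r hk r0 => [|r] //= _ _.
  by rewrite h0.
Qed.

Lemma nth_set_nth' (T : eqType) (d d' y : T) s n i : n < size s ->
  nth d (set_nth d' s n y) i = if i == n then y else nth d s i.
Proof.
elim: s n i => [|x s IH] [|n] [|i] //=; rewrite ltnS => h; rewrite ?IH //.
Qed.

Arguments row : simpl never.

Lemma slide0 f t k jj V :
  k <= jj -> jj.+1 < size (row t 0) -> jj < size (row t 1) ->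
  ltL (nth dflt (row t 1) jj) (nth dflt (row t 0) jj.+1) ->
  run f t (Slide 0 k) = Some (V, Cancelled) -> size (row V 0) = size (row t 0).
Proof.
elim: f t k => [|f IH] t k //= hk hs0 hs1 hlt.
rewrite /step.
have -> : k.+1 < size (row t 0) by lia.
have -> : k < size (row t 1) by lia.
rewrite /=.
have hsz : size (set_nth (nth dflt (row t 0) k.+1) (row t 0) k (nth dflt (row t 0) k.+1))
   = size (row t 0) by rewrite size_set_nth; lia.
have hsz' : size (set_nth (nth dflt (row t 1) k) (row t 0) k (nth dflt (row t 1) k))
   = size (row t 0) by rewrite size_set_nth; lia.
case: ifP => hc.
  have hkj : k < jj.
    rewrite ltn_neqAle hk andbT; apply/eqP => ekj; subst k.
    move: hc; rewrite (ltL_asym hlt) /=.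
    case/andP => /eqP E _; by rewrite E ltL_irr in hlt.
  move/IH; rewrite !row_set_entry /= => ->; rewrite ?hsz //.
  have hks : k < size (row t 0) by lia.
  rewrite nth_set_nth' //.
  case: ifP => [/eqP ?|_ //]; lia.
move/tail_rows; rewrite !row_set_entry /= => ->; rewrite ?hsz' //.
lia.
Qed.

Definition PartMono (t : tableau) := forall i i', i <= i' -> size (row t i') <= size (row t i).
Definition ColMono (t : tableau) j := forall k i, j <= k -> k < size (row t i.+1) ->
  leL (nth dflt (row t i) k) (nth dflt (row t i.+1) k).
Definition G (U : tableau) c k := exists jj, [/\ k <= jj, jj < c, jj < size (row U 1) &
  ltL (nth dflt (row U 1) jj) (nth dflt (row U 0) jj.+1)].

Lemma chain t j k i d : PartMono t -> ColMono t j -> j <= k -> k < size (row t (i + d)) ->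
  leL (nth dflt (row t i) k) (nth dflt (row t (i + d)) k).
Proof.
move=> hp hc hjk; elim: d => [|d IH] h; first by rewrite addn0 leL_refl.
apply: leL_trans (IH _) _.
  apply: leq_trans h _; apply: hp; lia.
rewrite addnS in h *; exact: hc.
Qed.

Lemma size_set_entry t r j a i : j < size (row t r) ->
  size (row (set_entry t r j a) i) = size (row t i).
Proof.
move=> h; rewrite row_set_entry; have [->|ne] := eqVneq i r; rewrite ?eqxx ?(negbTE ne) //.
rewrite size_set_nth; lia.
Qed.

Lemma nth_set_entry t r j a i k : j < size (row t r) ->
  nth dflt (row (set_entry t r j a) i) k =
  if (i == r) && (k == j) then a else nth dflt (row t i) k.
Proof.
move=> h; rewrite row_set_entry; have [->|ne] := eqVneq i r; rewrite ?eqxx ?(negbTE ne) //=.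
by rewrite nth_set_nth'.
Qed.

Lemma colins f t z j U c :
  PartMono t -> ColMono t j -> isB1 z -> j <= size (row t 0) ->
  run f t (ColIns z j) = Some (U, NewBox 0 c) ->
  [/\ size (row U 0) = c.+1, isB1 (nth dflt (row U 0) c), j <= c,
     nth dflt (row U 0) j = z \/ G U c j &
     [/\ (forall c0, j <= c0 -> c0 < c -> isB0 (nth dflt (row U 0) c0) -> G U c c0),
     (forall i k, k < j -> nth dflt (row U i) k = nth dflt (row t i) k) &
     (forall i, 0 < i -> size (row U i) = size (row t i))]].
Proof.
elim: f t z j => [|f IH] t z j hp hc hz hj; first by [].
rewrite /= /step.
set colR := [seq r <- iota 0 (size t) | j < size (row t r)].
set ents := [seq nth dflt (row t r) j | r <- colR].
set big := [seq a <- ents | ltL z a].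
have hbig : forall a, a \in big -> ltL z a /\ a \in ents
  by move=> a; rewrite mem_filter => /andP[].
case E: big => [|b s].
  rewrite run_fin => -[<- e0 ec].
  have cR : colR = [::] by case: (colR) e0.
  rewrite -ec e0.
  have s0 : size (row t 0) = j.
    apply/eqP; rewrite eqn_leq hj andbT leqNgt; apply/negP => hlt.
    have : 0 \in colR.
      rewrite mem_filter hlt mem_iota /=.
      by case: (t) hlt => //; rewrite /row.
    by rewrite cR.
  have R0 : row (set_row t 0 (rcons (row t 0) z)) 0 = rcons (row t 0) z by rewrite row_set_row.
  have Ri : forall i, 0 < i -> row (set_row t 0 (rcons (row t 0) z)) i = row t i.
    by move=> i hi; rewrite row_set_row; case: eqP => // e; rewrite e in hi.
  have Rz : nth dflt (rcons (row t 0) z) j = z by rewrite nth_rcons s0 ltnn eqxx.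
  rewrite s0 R0 size_rcons Rz.
  split; [by rewrite s0 | done | done | by left | split].
  - move=> c0 h1 h2; lia.
  - move=> i k hk; case: (posnP i) => [->|hi]; last by rewrite Ri.
    by rewrite R0 nth_rcons s0 hk.
  - by move=> i hi; rewrite Ri.
rewrite /=; change (foldl minL b s) with (least (b::s)).
set w := least (b :: s).
have [hzw hwe] : ltL z w /\ w \in ents by apply: hbig; rewrite E least_mem.
have hw1 := ltL_B1 hz hzw.
have -> : isB0 w = false by move: hw1; rewrite /isB1; case: (isB0 w).
set idx := index w ents.
set r := nth 0 colR idx.
have hidx : idx < size colR by rewrite -(size_map (fun r => nth dflt (row t r) j)) index_mem.
have hrc : r \in colR by apply: mem_nth.
have [hjr hrt] : j < size (row t r) /\ r < size t.
  by move: hrc; rewrite mem_filter mem_iota => /andP[-> /andP[_ ->]].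
have hwr : nth dflt (row t r) j = w.
  by rewrite -[RHS](nth_index dflt hwe) (nth_map 0).
set t' := set_entry t r j z.
have hs' : forall i, size (row t' i) = size (row t i) by move=> i; exact: size_set_entry.
have hn' : forall i k, nth dflt (row t' i) k =
    if (i == r) && (k == j) then z else nth dflt (row t i) k
  by move=> i k; exact: nth_set_entry.
have hp' : PartMono t' by move=> i i' hi; rewrite !hs'; exact: hp.
have hc' : ColMono t' j.+1.
  move=> k i hk hk'; rewrite !hn'.
  have -> : (k == j) = false by apply/negbTE; rewrite neq_ltn hk orbT.
  rewrite !andbF; apply: hc; [lia | by rewrite -hs'].
have hj' : j.+1 <= size (row t' 0).
  rewrite hs'; apply: leq_trans hjr (hp _ _ _); lia.
move/(IH _ _ _ hp' hc' hw1 hj') => [hsU hB1 hjc he [hb hfr hsz]].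
have hU0j : nth dflt (row U 0) j = if r == 0 then z else nth dflt (row t 0) j.
  by rewrite hfr // hn' eqxx andbT eq_sym.
have Gj : 0 < r -> G U c j.
  move=> r1.
  case: he => [hw|[jj [h1 h2 h3 h4]]]; last by exists jj; split => //; lia.
  exists j; split => //.
    rewrite hsz // hs'; apply: leq_trans hjr (hp _ _ _); lia.
  rewrite hw hfr // hn' eqxx andbT.
  case: ifP => [_|r1n]; first by [].
  have r2 : 1 < r by move: r1 r1n; case: (r) => [|[|]].
  have hle : leL (nth dflt (row t 1) j) w.
    by rewrite -hwr -(subnKC (ltnW r2)); apply: (chain hp hc) => //; rewrite subnKC // ltnW.
  suff hne : (nth dflt (row t 1) j == w) = false by move: hle; rewrite /leL hne.
  have p0 : j < size (row t 0) by apply: leq_trans hjr (hp _ _ _).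
  have p1 : j < size (row t 1) by apply: leq_trans hjr (hp _ _ _); lia.
  have eiota : iota 0 (size t) = 0 :: 1 :: iota 2 (size t).-2.
    by case: (size t) hrt r2 => [|[|n]] //=; lia.
  have cRe : colR = 0 :: 1 :: [seq r <- iota 2 (size t).-2 | j < size (row t r)].
    by rewrite /colR eiota /= p0 p1.
  have i2 : 1 < idx.
    rewrite ltnNge; apply/negP => hi.
    move: r2; rewrite /r cRe.
    by case: (idx) hi => [|[|]].
  have := before_find dflt i2.
  by rewrite /ents cRe /=.
split => //.
- lia.
- case: (posnP r) => [r0|r1]; last by right; apply: Gj.
  by left; rewrite hU0j r0.
split.
- move=> c0 h1 h2 h3.
  case: (ltngtP j c0) h1 => [hlt _|//|ec _]; first by apply: hb.
  subst c0; move: h3; rewrite hU0j; case: ifP => [_|r0].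
    by move: hz; rewrite /isB1; case: (isB0 z).
  by move=> _; apply: Gj; rewrite lt0n r0.
- move=> i k hk; rewrite hfr; last lia.
  rewrite hn'; have -> : (k == j) = false by apply/negbTE; rewrite neq_ltn hk.
  by rewrite andbF.
- by move=> i hi; rewrite hsz // hs'.
Qed.

Lemma part_of_spo m n t : is_spo m n t -> PartMono t.
Proof.
move=> [_ [hs _]] i i' hii'.
case: (ltnP i' (size t)) => hi'; last by rewrite /row nth_default.
have gt : transitive geq by move=> y x z /= h1 h2; lia.
have := sorted_leq_nth gt (fun x => leqnn x) 0 hs.
move=> /(_ i i'); rewrite !inE !size_map => /(_ (leq_ltn_trans hii' hi') hi' hii').
by rewrite !(nth_map [::]) //; apply: leq_ltn_trans hii' hi'.
Qed.

Lemma entry_nth t r k : k < size (row t r) -> entry t r k = Some (nth dflt (row t r) k).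
Proof. by move=> h; rewrite /entry (nth_map dflt). Qed.

Lemma col_of_spo m n t : is_spo m n t -> ColMono t 0.
Proof.
move=> hs; have hp := part_of_spo hs.
move: hs => [_ [_ [_ [_ [hy [_ [h0 [_ [_ h1]]]]]]]]] k i _ hk.
have hk0 : k < size (row t i) by apply: leq_trans hk (hp _ _ _).
have e1 := entry_nth hk; have e0 := entry_nth hk0.
move: (hy i k) (h0 i k _ _ e0 e1) (h1 i k _ _ e0 e1); rewrite e0 e1 /=.
set a := nth dflt (row t i) k; set b := nth dflt (row t i.+1) k.
rewrite /isB1 /leL.
case: a => [[ia ba]|ia]; case: b => [[ib bb]|ib] //=.
- by move=> _ /(_ isT isT) ->; rewrite orbT.
- by move=> /(_ isT).
- by move=> _ _ ->.
Qed.

Unset Implicit Arguments.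

Theorem mainTheorem5 (m n : nat) (T U V : tableau) (x1 x2 : letter) (c : nat) :
  0 < m -> 0 < n ->
  is_spo m n T ->
  inB1 n x1 ->
  insert_col x1 T = Some (U, NewBox 0 c) ->
  inB0 m x2 ->
  insert_row U x2 = Some (V, Cancelled) ->
  size (row V 0) = size (row U 0).
Proof.
move=> _ _ hT hx1 hU hx2.
have hz : isB1 x1 by move: hx1; case: (x1) => [[]|].
have := colins (part_of_spo hT) (col_of_spo hT) hz (leq0n _) hU.
move=> [hsU hB1 _ _ [hb _ _]].
rewrite /insert_row.
have -> : fuel U = (fuel U).-1.+1 by rewrite /fuel addnS.
rewrite /= /step.
set big := [seq a <- row U 0 | ltL x2 a].
have hbig : forall a, a \in big -> ltL x2 a /\ a \in row U 0
  by move=> a; rewrite mem_filter => /andP[].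
case E: big => [|b s]; first by rewrite run_fin.
rewrite /=; change (foldl minL b s) with (least (b::s)).
set w := least (b :: s).
have [hxw hwe] : ltL x2 w /\ w \in row U 0 by apply: hbig; rewrite E least_mem.
set c0 := index w (row U 0).
have hc0 : c0 < size (row U 0) by rewrite index_mem.
have hnc0 : nth dflt (row U 0) c0 = w by rewrite nth_index.
case: ifP => [/andP[_ /eqP hw]|_].
  have hc0c : c0 < c.
    rewrite ltn_neqAle -ltnS -hsU hc0 andbT; apply/eqP => e.
    by move: hB1; rewrite -e hnc0 hw.
  have [jj [h1 h2 h3 h4]] := hb c0 (leq0n _) hc0c (ltac:(by rewrite hnc0 hw)).
  apply: slide0 h1 _ h3 h4; lia.
case: ifP => hw0.
  move/tail_rows => -> //.
  - by rewrite size_set_entry.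
  - by rewrite size_set_entry // hsU.
move=> H; have hw1 : isB1 w by rewrite /isB1 hw0.
by case: (col_noncancel hw1 H).
Qed.
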